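(* Fix an integer $k\ge2$. Consider real variables $\{d_{u,i}\}_{i\in[k]}$ and $\{d_{v,i}\}_{i\in[k]}$ subject to the constraints (1) $0\le d_{w,i}\le1$ for all $w\in\{u,v\}$, $i\in[k]$, and (2) $\sum_{i\in[k]}d_{w,i}=k-1$ for each $w\in\{u,v\}$. Then for any fixed feasible values $\{d^*_{u,i}\}_{i\in[k]}$, $\{d^*_{v,i}\}_{i\in[k]}$, there exist vectors $a_u,a_v\in\mathbb{R}^k$ with $\|a_u\|_2\le\sqrt{k/2}$ and $\|a_v\|_2\le\sqrt{k/2}$ such that, over all feasible values of the variables, the expression $$\sum_{i\in[k]}a_{u,i}d_{u,i}+\sum_{i\in[k]}a_{v,i}d_{v,i}+\frac12\sum_{i\in[k]}|d_{u,i}-d_{v,i}|$$ attains its minimum value at $\{d^*_{u,i}\}$, $\{d^*_{v,i}\}$ (not necessarily uniquely). *)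

(* Defs.v *)
From mathcomp Require Import all_boot all_order all_algebra.
Set Implicit Arguments. Unset Strict Implicit. Unset Printing Implicit Defensive.
Import Order.TTheory GRing.Theory Num.Theory.
Local Open Scope ring_scope.

Definition feasible (R : realFieldType) (k : nat) (d : 'I_k -> R) : Prop :=
  (forall i, 0 <= d i <= 1) /\ \sum_(i < k) d i = (k - 1)%:R.

Definition norm2 (R : rcfType) (k : nat) (a : 'I_k -> R) : R :=
  Num.sqrt (\sum_(i < k) a i ^+ 2).

Definition obj (R : realFieldType) (k : nat) (au av du dv : 'I_k -> R) : R :=
  \sum_(i < k) au i * du i + \sum_(i < k) av i * dv i
  + 2^-1 * \sum_(i < k) `|du i - dv i|.

(* Main.v *)
Require Import Defs.
From mathcomp Require Import all_boot all_order all_algebra.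
From mathcomp Require Import ring lra.
Import Order.TTheory GRing.Theory Num.Theory.
Local Open Scope ring_scope.

Lemma term_ge (R : rcfType) (xs ys x y : R) :
  (- Num.sg (xs - ys) / 2) * xs + (Num.sg (xs - ys) / 2) * ys + 2^-1 * `|xs - ys|
  <= (- Num.sg (xs - ys) / 2) * x + (Num.sg (xs - ys) / 2) * y + 2^-1 * `|x - y|.
Proof.
set s := Num.sg (xs - ys).
have A : `|xs - ys| = s * (xs - ys).
  exact: normrEsg.
have B : s * (x - y) <= `|x - y|.
  apply: le_trans (ler_norm _) _; rewrite normrM /s normr_sg.
  by case: (_ != 0); rewrite ?mul1r ?mul0r.
rewrite A.
have -> : - s / 2 * xs + s / 2 * ys + 2^-1 * (s * (xs - ys)) = 0 by field.
have -> : - s / 2 * x + s / 2 * y + 2^-1 * `|x - y| = 2^-1 * (`|x - y| - s * (x - y)) by field.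
by apply: mulr_ge0; [rewrite invr_ge0 ler0n | rewrite subr_ge0].
Qed.

Theorem lemma4p4 (R : rcfType) (k : nat) (hk : (2 <= k)%N)
  (dus dvs : 'I_k -> R) :
  feasible dus -> feasible dvs ->
  exists au av : 'I_k -> R,
    norm2 au <= Num.sqrt (k%:R / 2) /\ norm2 av <= Num.sqrt (k%:R / 2) /\
    forall du dv : 'I_k -> R, feasible du -> feasible dv ->
      obj au av dus dvs <= obj au av du dv.
Proof.
move=> _ _.
pose s i := Num.sg (dus i - dvs i).
have nb : forall c : 'I_k -> R, (forall i, `|c i| <= 1) ->
    norm2 (fun i => c i / 2) <= Num.sqrt (k%:R / 2).
  move=> c hc; rewrite /norm2 ler_sqrt; last by rewrite divr_ge0 ?ler0n.
  apply: (@le_trans _ _ (\sum_(i < k) (1 / 2 : R))).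
    apply: ler_sum => i _.
    have h1 : c i ^+ 2 <= 1.
      by rewrite -real_normK ?num_real // -[1](expr1n _ 2%N) lerXn2r ?nnegrE ?normr_ge0.
    have -> : (c i / 2) ^+ 2 = c i ^+ 2 / 4 by field.
    lra.
  by rewrite sumr_const card_ord -[X in X <= _]mulr_natr mul1r mulrC.
exists (fun i => - s i / 2), (fun i => s i / 2).
split.
  apply: (nb (fun i => - s i)) => i; rewrite normrN /s normr_sg; by case: (_ != 0).
split.
  apply: (nb s) => i; rewrite /s normr_sg; by case: (_ != 0).
move=> du dv _ _.
rewrite /obj !mulr_sumr -!big_split /=.
by apply: ler_sum => i _; apply: term_ge.
Qed.
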